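(* Let $D=\{(x,t)\in[-2,2]^2: x^2-2\le t\}$, let $p\colon D\to[-2,2]$, $p(x,t)=t$, and let $\phi\colon D\to D$, $\phi(x,t)=(x^2-2,\;x^2(t-2)+2)$. Suppose $E\subset D$ is a Borel set such that (i) $\phi(E)\subset E$ modulo Lebesgue-null sets (i.e. $\phi(E)\setminus E$ has two-dimensional Lebesgue measure zero), and (ii) for almost every $t\in p(E)$, the fiber $p^{-1}(t)=\{(x,t): x^2\le t+2\}$ is, up to a set of one-dimensional Lebesgue measure zero in the fiber, either contained in $E$ or contained in $D\setminus E$. Then $E$ is either Lebesgue-null or Lebesgue-conull in $D$.
   Context: Measures on $D$ are two-dimensional Lebesgue measure; measures on fibers $p^{-1}(t)$ (horizontal segments) are one-dimensional Lebesgue measure; ''almost every $t$'' refers to one-dimensional Lebesgue measure. *)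

(* Defs.v *)
From HB Require Import structures.
From mathcomp Require Import all_boot all_order all_algebra.
From mathcomp Require Import all_classical all_reals all_analysis.
Set Implicit Arguments. Unset Strict Implicit. Unset Printing Implicit Defensive.
Import Order.TTheory GRing.Theory Num.Theory.
Local Open Scope classical_set_scope.
Local Open Scope ring_scope.

(* Points of R^2 are pairs (x, t) : R * R, with the product (= Borel) sigma-algebra. *)

Definition domD (R : realType) : set (R * R) :=
  [set z | -2 <= z.1 <= 2 /\ -2 <= z.2 <= 2 /\ z.1 ^+ 2 - 2 <= z.2].
Arguments domD R : clear implicits.

Definition projp (R : realType) (z : R * R) : R := z.2.

Definition phimap (R : realType) (z : R * R) : R * R :=
  (z.1 ^+ 2 - 2, z.1 ^+ 2 * (z.2 - 2) + 2).

Definition leb2 (R : realType) : set (R * R) -> \bar R :=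
  ((@lebesgue_measure R) \x (@lebesgue_measure R))%E.
Arguments leb2 R : clear implicits.

(* the fiber p^{-1}(t) = {(x,t) in D}, seen as a subset of the real line (x-coordinate) *)
Definition fiberx (R : realType) (t : R) : set R :=
  [set x | domD R (x, t)].

Definition slicex (R : realType) (E : set (R * R)) (t : R) : set R :=
  [set x | E (x, t)].

(* Main.v *)
Require Import Defs.
From HB Require Import structures.
From mathcomp Require Import all_boot all_order all_algebra.
From mathcomp Require Import all_classical all_reals all_analysis.
From mathcomp Require Import measurable_realfun.
From mathcomp Require Import lra ring.
Import Order.TTheory GRing.Theory Num.Theory.
Local Open Scope classical_set_scope.
Local Open Scope ring_scope.

Section Lip.
Context {R : realType}.
Local Notation mu := ((wlength (R:=R) idfun)^*)%mu.

Lemma lip_itv_bound (f : R -> R) (K : R) (B : set R) (a b : R) :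
  0 <= K -> (forall x y, B x -> B y -> `|f x - f y| <= K * `|x - y|) ->
  (mu (f @` (`]a, b[ `&` B)) <= (2 * K)%:E * wlength idfun `]a, b[)%E.
Proof.
move=> K0 Lf.
have [ab|ba] := ltP a b; last first.
  rewrite (_ : `]a, b[ `&` B = set0); last first.
    by apply/seteqP; split => // x [/=]; rewrite in_itv/= => /andP[ax xb];
       have := lt_trans ax xb; rewrite ltNge ba.
  rewrite image_set0 (_ : mu set0 = 0%E) ?mule_ge0 ?wlength_ge0 ?lee_fin ?mulr_ge0//.
have [[x0 [Ix0 Bx0]]|nE] := pselect (exists x, (`]a, b[ `&` B) x); last first.
  rewrite (_ : `]a, b[ `&` B = set0); last first.
    by apply/seteqP; split => // x Hx; apply: nE; exists x.
  rewrite image_set0 (_ : mu set0 = 0%E) ?mule_ge0 ?wlength_ge0 ?lee_fin ?mulr_ge0//.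
have sub : f @` (`]a, b[ `&` B) `<=`
    `[f x0 - K * (b - a), f x0 + K * (b - a)].
  move=> _ [x [Ix Bx] <-]; rewrite /= in_itv/=.
  have h : `|f x - f x0| <= K * (b - a).
    apply: (le_trans (Lf _ _ Bx Bx0)); apply: ler_wpM2l => //.
    move: Ix Ix0; rewrite /= !in_itv/= => /andP[ax xb] /andP[ax0 x0b].
    rewrite ler_norml; apply/andP; split; rewrite ?lerBlDr ?lerBrDl; lra.
  move: h; rewrite ler_norml => /andP[h1 h2]; apply/andP; split; lra.
apply: le_trans; first exact: (le_outer_measure mu _ _ sub).
rewrite [X in (X <= _)%E]/= -[((wlength idfun)^*)%mu _]/(lebesgue_measure _).
rewrite lebesgue_measure_itv/= wlength_itv/= !lte_fin ab.
case: ifPn => _; last by rewrite mule_ge0// lee_fin ?mulr_ge0// subr_ge0 ltW.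
rewrite -EFinD -EFinM lee_fin; lra.
Qed.


Lemma lip_negl (f : R -> R) (K : R) (B A : set R) :
  0 <= K -> (forall x y, B x -> B y -> `|f x - f y| <= K * `|x - y|) ->
  A `<=` B -> (@lebesgue_measure R).-negligible A ->
  (@lebesgue_measure R).-negligible (f @` A).
Proof.
move=> K0 Lf AB /negligible_outer_measure A0; apply/negligible_outer_measure.
apply/eqP; rewrite eq_le outer_measure_ge0 andbT.
apply/lee_addgt0Pr => e e0; rewrite add0e.
have e'0 : 0 < e / (2 * K + 1) by rewrite divr_gt0// ltr_wpDl// mulr_ge0.
have : (mu A < (e / (2 * K + 1))%:E)%E by rewrite A0 lte_fin.
rewrite measurable_realfun.outer_measure_open_itv_cover.
move=> /ereal_inf_lt[_ [F [Fitv AF] <-] Fe].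
have sub : f @` A `<=` \bigcup_k (f @` (F k `&` B)).
  move=> _ [x Ax <-]; have [k _ Fkx] := AF x Ax.
  by exists k => //; exists x => //; split => //; exact: AB.
apply: le_trans; first exact: (le_outer_measure mu _ _ sub).
apply: le_trans; first exact: outer_measure_sigma_subadditive.
apply: (@le_trans _ _ (\sum_(0 <= k <oo) ((2 * K)%:E * wlength idfun (F k)))%E).
  apply: lee_nneseries => // k _.
  have [[a b] /= ->] := Fitv k; exact: lip_itv_bound.
rewrite nneseriesZl//.
apply: (@le_trans _ _ ((2 * K)%:E * (e / (2 * K + 1))%:E)%E).
  by apply: lee_wpmul2l; [rewrite lee_fin mulr_ge0|exact: ltW Fe].
rewrite -EFinM lee_fin mulrA ler_pdivrMr ?ltr_wpDl ?mulr_ge0//.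
rewrite mulrC ler_pM2l//; lra.
Qed.

End Lip.

Section Sq.
Context {R : realType}.

Lemma sqrt_lip (c u v : R) : 0 < c -> c ^+ 2 <= u -> c ^+ 2 <= v ->
  `|Num.sqrt u - Num.sqrt v| <= c^-1 * `|u - v|.
Proof.
move=> c0 cu cv.
have u0 : 0 <= u by apply: le_trans cu; exact: sqr_ge0.
have v0 : 0 <= v by apply: le_trans cv; exact: sqr_ge0.
have su : c <= Num.sqrt u.
  by rewrite -(ger0_norm (ltW c0)) -sqrtr_sqr ler_sqrt.
have sv : c <= Num.sqrt v.
  by rewrite -(ger0_norm (ltW c0)) -sqrtr_sqr ler_sqrt.
have eu := sqr_sqrtr u0; have ev := sqr_sqrtr v0.
rewrite ler_pdivlMl//.
have -> : u - v = (Num.sqrt u - Num.sqrt v) * (Num.sqrt u + Num.sqrt v).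
  by rewrite -subr_sqr eu ev.
rewrite normrM [X in _ <= _ * X]ger0_norm; last by lra.
rewrite mulrC ler_wpM2l//; lra.
Qed.

Lemma negl_set1 (a : R) : (@lebesgue_measure R).-negligible [set a].
Proof. by apply/negligibleP => //; exact: lebesgue_measure_set1. Qed.

Lemma sq_pre_negl (A : set R) : (@lebesgue_measure R).-negligible A ->
  (@lebesgue_measure R).-negligible [set x | A (x ^+ 2 - 2)].
Proof.
move=> nA.
pose g (y : R) := Num.sqrt (y + 2).
pose An (n : nat) := A `&` [set y : R | (n.+1%:R^-1) ^+ 2 <= y + 2].
pose U := \bigcup_n (g @` An n).
have nU : (@lebesgue_measure R).-negligible U.
  apply: negligible_bigcup => n.
  apply: (@lip_negl _ g (n.+1%:R^-1)^-1 [set y : R | (n.+1%:R^-1) ^+ 2 <= y + 2]).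
  - by rewrite invr_ge0 invr_ge0.
  - move=> x y /= hx hy; rewrite /g.
    rewrite (_ : `|x - y| = `|(x + 2) - (y + 2)|); last by congr `|_|; lra.
    by apply: sqrt_lip.
  - by move=> y [].
  - by apply: negligibleS nA => y [].
have nU' : (@lebesgue_measure R).-negligible ((fun y => - y) @` U).
  apply: (@lip_negl _ _ 1 setT).
  - exact: ler01.
  - by move=> x y _ _; rewrite mul1r -opprD normrN.
  - by [].
  - exact: nU.
apply: (negligibleS _ (negligibleU (negligibleU (negl_set1 0) nU) nU')).
move=> x /= Ax.
have [->|x0] := eqVneq x 0; first by left; left.
have ax : 0 < `|x| by rewrite normr_gt0.
pose n := Num.truncn (`|x|^-1).
have hn : n.+1%:R^-1 <= `|x|.
  rewrite invf_ple ?posrE//; apply: ltW.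
  exact: truncnS_gt.
have gx : g (x ^+ 2 - 2) = `|x| by rewrite /g subrK sqrtr_sqr.
have Anx : An n (x ^+ 2 - 2).
  split => //=; rewrite subrK -[x ^+ 2]real_normK ?num_real//.
  by rewrite lerXn2r// ?nnegrE// invr_ge0.
have [xp|xn] := ltP 0 x.
  left; right; exists n => //; exists (x ^+ 2 - 2) => //.
  by rewrite gx gtr0_norm.
right; exists `|x|; last by rewrite ler0_norm ?opprK.
by exists n => //; exists (x ^+ 2 - 2).
Qed.

End Sq.
Section Fub.
Context {R : realType}.
Local Notation lam := (@lebesgue_measure R).
Local Notation mu := ((@lebesgue_measure R) \x (@lebesgue_measure R))%E.

Lemma mu_xsec (A : set (R * R)) : measurable A ->
  mu A = (\int[lam]_x lam (xsection A x))%E.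
Proof. by []. Qed.

Lemma mu_ysec (A : set (R * R)) : measurable A ->
  mu A = (\int[lam]_y lam (ysection A y))%E.
Proof.
move=> mA.
have := indic_fubini_tonelli lam lam mA.
rewrite indic_fubini_tonelli_FE// indic_fubini_tonelli_GE//.
Qed.

Lemma ae0_int (f : R -> \bar R) : measurable_fun [set: R] f ->
  (forall x, (0 <= f x)%E) ->
  (\int[lam]_x f x = 0)%E <-> lam.-negligible [set x | f x != 0%E].
Proof.
move=> mf f0.
have -> : (\int[lam]_x f x = \int[lam]_x `|f x|)%E.
  by apply: eq_integral => x _; rewrite gee0_abs.
rewrite ae_eq_integral_abs//.
split.
- move=> H; case: H => N [mN N0 sub].
  exists N; split; [exact: mN|exact: N0|].
  move=> x /= fx0; apply: sub => /(_ I) h.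
  by rewrite h /= eqxx in fx0.
- move=> H; case: H => N [mN N0 sub].
  exists N; split; [exact: mN|exact: N0|].
  move=> x /= nP; apply: sub => /=.
  by apply/negP => /eqP fx0; apply: nP.
Qed.


Lemma nullx (A : set (R * R)) : measurable A ->
  lam.-negligible [set x | lam (xsection A x) != 0%E] -> mu A = 0%E.
Proof.
move=> mA H; rewrite mu_xsec//; apply/ae0_int => //.
exact: measurable_fun_xsection.
Qed.

Lemma xnull (A : set (R * R)) : measurable A -> mu A = 0%E ->
  lam.-negligible [set x | lam (xsection A x) != 0%E].
Proof.
move=> mA H; apply/(@ae0_int (lam \o xsection A)).
- exact: measurable_fun_xsection.
- by move=> x; exact: measure_ge0.
- by rewrite -mu_xsec.
Qed.

Lemma nully (A : set (R * R)) : measurable A ->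
  lam.-negligible [set y | lam (ysection A y) != 0%E] -> mu A = 0%E.
Proof.
move=> mA H; rewrite mu_ysec//; apply/ae0_int => //.
exact: measurable_fun_ysection.
Qed.

Lemma ynull (A : set (R * R)) : measurable A -> mu A = 0%E ->
  lam.-negligible [set y | lam (ysection A y) != 0%E].
Proof.
move=> mA H; apply/(@ae0_int (lam \o ysection A)).
- exact: measurable_fun_ysection.
- by move=> x; exact: measure_ge0.
- by rewrite -mu_ysec.
Qed.

End Fub.

Section NS.
Context {R : realType}.
Local Notation lam := (@lebesgue_measure R).
Local Notation mu := ((@lebesgue_measure R) \x (@lebesgue_measure R))%E.

Lemma mphi : measurable_fun setT (@phimap R).
Proof.
apply: measurable_fun_pair.
- apply: measurable_funB => //; apply: measurable_funX; exact: measurable_fst.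
- apply: measurable_funD => //; apply: measurable_funM.
  + apply: measurable_funX; exact: measurable_fst.
  + apply: measurable_funB => //; exact: measurable_snd.
Qed.

Lemma mg2 : measurable_fun setT (fun z : R * R => (z.1 ^+ 2 - 2, z.2)).
Proof.
apply: measurable_fun_pair.
- apply: measurable_funB => //; apply: measurable_funX; exact: measurable_fst.
- exact: measurable_snd.
Qed.

Lemma mg1 : measurable_fun setT (fun z : R * R => (z.1, z.1 ^+ 2 * (z.2 - 2) + 2)).
Proof.
apply: measurable_fun_pair.
- exact: measurable_fst.
- apply: measurable_funD => //; apply: measurable_funM.
  + apply: measurable_funX; exact: measurable_fst.
  + apply: measurable_funB => //; exact: measurable_snd.
Qed.

Lemma NS (M : set (R * R)) : measurable M -> mu M = 0%E ->
  mu (@phimap R @^-1` M) = 0%E.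
Proof.
move=> mM M0.
pose M1 := (fun z : R * R => (z.1 ^+ 2 - 2, z.2)) @^-1` M.
have mM1 : measurable M1 by rewrite -[M1]setTI; exact: mg2.
have M10 : mu M1 = 0%E.
  apply: nully => //.
  apply: (negligibleS _ (ynull _ mM M0)) => s /=; apply: contra => /eqP H.
  have nS : lam.-negligible (ysection M s).
    by apply/negligibleP => //; exact: measurable_ysection.
  have := sq_pre_negl _ nS.
  rewrite (_ : [set x | ysection M s (x ^+ 2 - 2)] = ysection M1 s).
    by move/negligibleP => ->//; exact: measurable_ysection.
  by apply/seteqP; split => x; rewrite /ysection /M1 /= !inE.
have mP : measurable (@phimap R @^-1` M) by rewrite -[X in measurable X]setTI; exact: mphi.
apply: nullx => //.
apply: negligibleS (negligibleU (negl_set1 0) (xnull _ mM1 M10)) => x /= Hx.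
have [->|x0] := eqVneq x 0; [by left|right].
move: Hx; apply: contra => /eqP H; apply/eqP/negligibleP.
  exact: measurable_xsection.
have nS : lam.-negligible (xsection M1 x).
  by apply/negligibleP => //; exact: measurable_xsection.
have x20 : 0 < x ^+ 2 by rewrite exprn_even_gt0.
apply: negligibleS (@lip_negl _ (fun s => (s - 2) / x ^+ 2 + 2) (x ^+ 2)^-1 setT _ _ _ _ nS).
- move=> t; rewrite /xsection /M1 /= !inE => Ht.
  exists (x ^+ 2 * (t - 2) + 2); first by rewrite inE.
  by rewrite addrK [_ * _ / _]mulrC mulKf ?gt_eqF// subrK.
- by apply/ltW; rewrite invr_gt0; exact: x20.
- move=> a b _ _.
  have -> : (a - 2) / x ^+ 2 + 2 - ((b - 2) / x ^+ 2 + 2) = (x ^+ 2)^-1 * (a - b).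
    by ring.
  rewrite normrM ger0_norm//; apply/ltW; rewrite invr_gt0; exact: x20.
- by [].
Qed.

End NS.

Section C4.
Context {R : realType}.
Local Notation lam := (@lebesgue_measure R).

Lemma claim4 (F Bad : set R) : lam.-negligible Bad ->
  (forall t, F t -> ~ Bad t -> -2 < t < 2 ->
     lam.-negligible ([set u | t ^+ 2 - 2 <= u <= 2] `\` F)) ->
  lam.-negligible ([set t | -2 < t < 2] `&` F) \/
  lam.-negligible ([set t | -2 <= t <= 2] `\` F).
Proof.
move=> nB key.
have [h|h] := pselect (lam.-negligible ([set t | -2 < t < 2] `&` F)); [by left|right].
have [t0 [[It0 Ft0] nBt0]] : exists t, ([set t | -2 < t < 2] `&` F) t /\ ~ Bad t.
  apply: contrapT => nex; apply: h; apply: (negligibleS _ nB) => t Ht.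
  by apply: contrapT => nb; apply: nex; exists t.
pose A := [set a : R | -2 <= a /\ lam.-negligible ([set u | a <= u <= 2] `\` F)].
have At0 : A (t0 ^+ 2 - 2).
  split; last exact: key.
  by have := sqr_ge0 t0; lra.
have A0 : A !=set0 by exists (t0 ^+ 2 - 2).
have Alb : has_lbound A by exists (-2) => a [].
pose c := inf A.
have cle a : A a -> c <= a by move=> Aa; exact: ge_inf.
have cge : -2 <= c by apply: lb_le_inf => // a [].
have c2 : c < 2.
  apply: (le_lt_trans (cle _ At0)); move: It0 => /andP[h1 h2]; nra.
have cm2 : c <= -2.
  rewrite leNgt; apply/negP => cgt.
  pose s := Num.sqrt (c + 2).
  have s0 : 0 < s by rewrite sqrtr_gt0; lra.
  have ss : s ^+ 2 = c + 2 by rewrite sqr_sqrtr//; lra.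
  have cs : c < s by nra.
  have s2 : s <= 2 by nra.
  have [a Aa aS] := inf_lt A0 cs.
  have [t [It [Ft nBt]]] : exists t, [set u | Num.max a (- s) < u < s] t /\ F t /\ ~ Bad t.
    apply: contrapT => nex.
    have : lam.-negligible `]Num.max a (- s), s[%classic.
      apply: (negligibleS _ (negligibleU Aa.2 nB)) => u /=.
      rewrite in_itv/= => /andP[hu1 hu2].
      have [Fu|nFu] := pselect (F u).
        right; apply: contrapT => nb; apply: nex; exists u; split => //.
        by rewrite /= hu1 hu2.
      left; split => //; move: hu1; rewrite gt_max => /andP[hu1 _].
      by rewrite (ltW hu1)/=; lra.
    move/negligibleP => /(_ (measurable_itv _)) H0.
    have := lebesgue_measure_itv `]Num.max a (- s), s[.
    rewrite [X in X = _ -> _]H0 /= lte_fin.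
    have hm : (Num.max a (- s) < s) by rewrite gt_max aS/=; lra.
    rewrite hm; move/esym/eqP; rewrite -EFinD eqe subr_eq0 => /eqP H1.
    by rewrite -H1 ltxx in hm.
  move: It => /andP[]; rewrite gt_max => /andP[ta tms] tsl.
  have It : -2 < t < 2 by apply/andP; split; lra.
  have At : A (t ^+ 2 - 2).
    by split; [have := sqr_ge0 t; lra|exact: key].
  have := cle _ At; nra.
have An n : lam.-negligible ([set u | -2 + n.+1%:R^-1 <= u <= 2] `\` F).
  have e0 : 0 < n.+1%:R^-1 :> R by rewrite invr_gt0.
  have cl : c < -2 + n.+1%:R^-1 by move: e0; set e := n.+1%:R^-1 => e0; lra.
  have [a Aa aS] := inf_lt A0 cl.
  apply: (negligibleS _ Aa.2) => u [/andP[u1 u2] nFu]; split => //.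
  apply/andP; split; last exact: u2.
  by move: aS u1; set e := n.+1%:R^-1; lra.
apply: (negligibleS _ (negligibleU (negl_set1 (-2)) (negligible_bigcup An))).
move=> u [/andP[u1 u2] nFu].
have [->|um2] := eqVneq u (-2); first by left.
right.
have u2p : 0 < u + 2 by rewrite lt_neqAle eq_sym addr_eq0 um2/=; lra.
exists (Num.truncn ((u + 2)^-1)) => //; split => //.
apply/andP; split; last exact: u2.
have : (Num.truncn ((u + 2)^-1)).+1%:R^-1 <= u + 2.
  rewrite invf_ple ?posrE//; apply: ltW; exact: truncnS_gt.
by set e := _^-1; lra.
Qed.
End C4.

Section Main.
Context {R : realType}.
Local Notation lam := (@lebesgue_measure R).
Local Notation mu := ((@lebesgue_measure R) \x (@lebesgue_measure R))%E.

Lemma mset_le (f g : R * R -> R) : measurable_fun setT f -> measurable_fun setT g ->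
  measurable [set z | f z <= g z].
Proof.
by move=> mf mg; rewrite -[X in measurable X]setTI; exact: measurable_fun_le.
Qed.

Lemma mdomD : measurable (domD R).
Proof.
have m1 : measurable_fun setT (fun z : R * R => z.1) by exact: measurable_fst.
have m2 : measurable_fun setT (fun z : R * R => z.2) by exact: measurable_snd.
have mc (r : R) : measurable_fun setT (fun _ : R * R => r) by exact: measurable_cst.
rewrite (_ : domD R = [set z | -2 <= z.1] `&` [set z | z.1 <= 2] `&`
   [set z | -2 <= z.2] `&` [set z | z.2 <= 2] `&` [set z | z.1 ^+ 2 - 2 <= z.2]).
  repeat apply: measurableI; apply: mset_le => //.
  by apply: measurable_funB => //; exact: measurable_funX.
apply/seteqP; split => z /=.
  by rewrite /domD/= => -[/andP[-> ->] [/andP[-> ->] ->]].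
by move=> [[[[h1 h2] h3] h4] h5]; rewrite /domD/= h1 h2 h3 h4.
Qed.

Lemma negl_strip (S : set R) : lam.-negligible S ->
  mu.-negligible (setT `*` S).
Proof.
move=> [S' [mS' S'0 SS']]; exists (setT `*` S'); split.
- exact: measurableX.
- rewrite product_measure1E//; apply: (@eq_trans _ _ (lam setT * 0)%E); last exact: mule0.
  by congr (_ * _)%E; exact: S'0.
- by move=> z [_ /SS' h]; split.
Qed.


Lemma ysecDE (E : set (R * R)) t :
  ysection (domD R `\` E) t = fiberx t `\` slicex E t.
Proof. by apply/seteqP; split => x; rewrite /ysection/fiberx/slicex/= in_setE. Qed.

Lemma ysecE (A : set (R * R)) t x : ysection A t x <-> A (x, t).
Proof. by rewrite /ysection/= in_setE. Qed.

Theorem main (E : set (R * R)) :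
  measurable E -> E `<=` domD R ->
  (leb2 R).-negligible ((phimap (R:=R)) @` E `\` E) ->
  (exists N : set R, (@lebesgue_measure R).-negligible N /\
     forall t, ((projp (R:=R)) @` E) t -> ~ N t ->
       (@lebesgue_measure R).-negligible (fiberx t `\` slicex E t) \/
       (@lebesgue_measure R).-negligible (fiberx t `&` slicex E t)) ->
  (leb2 R).-negligible E \/ (leb2 R).-negligible (domD R `\` E).
Proof.
rewrite /leb2 => mE ED [M [mM M0 sM]] [N [nN HN]].
have mD := mdomD.
pose F0 := [set t | lam (ysection (domD R `\` E) t) = 0%E].
have mF0 : measurable F0.
  rewrite -[X in measurable X]setTI.
  have mf := measurable_fun_ysection lam (measurableD mD mE).
  exact: (mf measurableT [set 0%E] (emeasurable_set1 _)).
pose P := domD R `&` (setT `*` F0).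
have mP : measurable P by apply: measurableI => //; exact: measurableX.
have EP0 : mu (E `\` P) = 0%E.
  apply: nully; first exact: measurableD mE mP.
  apply: (negligibleS _ nN) => t /= Ht; apply: contrapT => nNt; move: Ht.
  apply/negP; rewrite negbK; apply/eqP.
  have [F0t|nF0t] := pselect (F0 t).
    rewrite (_ : ysection (E `\` P) t = set0); first exact: measure0.
    apply/seteqP; split => x; last by [].
    move/ysecE => -[Ex nPx]; apply: nPx; split; first exact: ED.
    by split; [exact: I|exact: F0t].
  have [pt|npt] := pselect (((projp (R:=R)) @` E) t).
    case: (HN t pt nNt) => h.
      exfalso; apply: nF0t; rewrite /F0/= ysecDE.
      apply/negligibleP; last exact: h.
      rewrite -ysecDE; exact: measurable_ysection (measurableD mD mE).
    apply/negligibleP; first exact: measurable_ysection (measurableD mE mP).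
    apply: (negligibleS _ h) => x /ysecE [Ex _]; split; last exact: Ex.
    exact: ED.
  rewrite (_ : ysection (E `\` P) t = set0); first exact: measure0.
  apply/seteqP; split => x; last by [].
  move/ysecE => -[Ex _]; apply: npt; by exists (x, t).
have PE0 : mu (P `\` E) = 0%E.
  apply: nully; first exact: measurableD mP mE.
  apply: (negligibleS _ (negligible_set0 lam)) => t /= Ht; move: Ht.
  apply/negP; rewrite negbK; apply/eqP.
  have [F0t|nF0t] := pselect (F0 t).
    have h : lam.-negligible (ysection (domD R `\` E) t).
      by apply/negligibleP; [exact: measurable_ysection (measurableD mD mE)|exact: F0t].
    apply/negligibleP; first exact: measurable_ysection (measurableD mP mE).
    apply: (negligibleS _ h) => x /ysecE [[Dx _] nEx]; apply/ysecE; split.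
      exact: Dx.
    exact: nEx.
  rewrite (_ : ysection (P `\` E) t = set0); first exact: measure0.
  apply/seteqP; split => x; last by [].
  by move/ysecE => -[[_ [_ F0t]] _]; apply: nF0t.
have nEP : mu.-negligible (E `\` P).
  by exists (E `\` P); split; [exact: measurableD mE mP|exact: EP0|exact: subset_refl].
have nPE : mu.-negligible (P `\` E).
  by exists (P `\` E); split; [exact: measurableD mP mE|exact: PE0|exact: subset_refl].
pose Z := P `\` (@phimap R) @^-1` P.
have mphiP : measurable ((@phimap R) @^-1` P).
  by rewrite -[X in measurable X]setTI; exact: mphi.
have mZ : measurable Z by exact: measurableD.
have Z0 : mu Z = 0%E.
  have mEP : measurable (E `\` P) by exact: measurableD mE mP.
  have mpEP : measurable ((@phimap R) @^-1` (E `\` P)).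
    by rewrite -[X in measurable X]setTI; exact: mphi.
  have mpM : measurable ((@phimap R) @^-1` M).
    by rewrite -[X in measurable X]setTI; exact: mphi.
  have n1 : mu.-negligible ((@phimap R) @^-1` (E `\` P)).
    by exists ((@phimap R) @^-1` (E `\` P)); split; [exact: mpEP|exact: NS mEP EP0|exact: subset_refl].
  have n2 : mu.-negligible ((@phimap R) @^-1` M).
    by exists ((@phimap R) @^-1` M); split; [exact: mpM|exact: NS mM M0|exact: subset_refl].
  have nZ : mu.-negligible Z.
    apply: (negligibleS _ (negligibleU nPE (negligibleU n1 n2))) => z [Pz nPphi].
    have [Ez|nEz] := pselect (E z); last by left; split.
    right; have [Ephi|nEphi] := pselect (E (phimap z)).
      by left; split.
    right; apply: sM; split; last exact: nEphi.
    by exists z.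
  apply/negligibleP; first exact: mZ.
  exact: nZ.
pose Bad := [set t | lam (ysection Z t) != 0%E].
have nBad : lam.-negligible Bad := ynull Z mZ Z0.
have claim3 t : F0 t -> ~ Bad t -> -2 < t < 2 ->
     lam.-negligible ([set u | t ^+ 2 - 2 <= u <= 2] `\` F0).
  move=> F0t nBt /andP[t1 t2].
  have nZt : lam.-negligible (ysection Z t).
    apply/negligibleP; first exact: measurable_ysection mZ.
    by apply/eqP; apply/negPn; apply/negP; exact: nBt.
  apply: (negligibleS _ (@lip_negl _ (fun x => x ^+ 2 * (t - 2) + 2) 16
    [set x | -2 <= x <= 2] _ _ _ _ nZt)).
  - move=> u [/andP[u1 u2] nF0u].
    pose x := Num.sqrt ((2 - u) / (2 - t)).
    have q0 : 0 <= (2 - u) / (2 - t) by apply: divr_ge0; lra.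
    have xx : x ^+ 2 = (2 - u) / (2 - t) := sqr_sqrtr q0.
    have x0 : 0 <= x := sqrtr_ge0 _.
    have xle : x ^+ 2 <= t + 2.
      rewrite xx ler_pdivrMr; last lra.
      nra.
    have fx : x ^+ 2 * (t - 2) + 2 = u.
      rewrite xx (_ : t - 2 = - (2 - t)); last by ring.
      rewrite mulrN divfK; first lra.
      by rewrite subr_eq0 eq_sym lt_eqF.
    exists x; last exact: fx.
    apply/ysecE; split.
      split; last by split; [exact: I|exact: F0t].
      have x4 : x * x < 4 by rewrite -expr2; lra.
      split; first by rewrite /=; apply/andP; split; nra.
      split; first by rewrite /=; apply/andP; split; lra.
      by rewrite /=; lra.
    move=> [_ [_ h]]; apply: nF0u; move: h; rewrite /phimap/= fx; exact.
  - lra.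
  - move=> x y /andP[x1 x2] /andP[y1 y2].
    have -> : x ^+ 2 * (t - 2) + 2 - (y ^+ 2 * (t - 2) + 2) = ((t - 2) * (x + y)) * (x - y).
      by ring.
    rewrite normrM ler_wpM2r//.
    rewrite normrM (_ : 16 = 4 * 4); last lra.
    apply: ler_pM; [exact: normr_ge0|exact: normr_ge0| |].
      by rewrite ler_norml; apply/andP; split; lra.
    by rewrite ler_norml; apply/andP; split; lra.
  - by move=> x /ysecE [[Dx _] _]; case: Dx.
have [c1|c2] := claim4 F0 Bad nBad claim3.
  left.
  have ns := negl_strip _ (negligibleU c1 (negligibleU (negl_set1 (-2)) (negl_set1 2))).
  apply: (negligibleS _ (negligibleU nEP ns)) => z Ez.
  have [Pz|nPz] := pselect (P z); last by left.
  right; split; first exact: I.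
  case: Pz => Dz [_ F0z].
  case: Dz => _ [/andP[h1 h2] _].
  have [e1|n1] := eqVneq z.2 (-2); first by right; left.
  have [e2|n2] := eqVneq z.2 2; first by right; right.
  left; split; last exact: F0z.
  apply/andP; split.
    by rewrite lt_neqAle eq_sym n1 h1.
  by rewrite lt_neqAle n2 h2.
right.
apply: (negligibleS _ (negligibleU nPE (negl_strip _ c2))) => z [Dz nEz].
have [F0z|nF0z] := pselect (F0 z.2).
  by left; split; [split; [exact: Dz|split; [exact: I|exact: F0z]]|exact: nEz].
right; split; first exact: I.
split; last exact: nF0z.
by case: Dz => _ [h _].
Qed.

End Main.

Theorem lemma3p3 (R : realType) (E : set (R * R)) :
  measurable E -> E `<=` domD R ->
  (* (i) phi(E) \ E is Lebesgue-null *)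
  (leb2 R).-negligible ((phimap (R:=R)) @` E `\` E) ->
  (* (ii) for a.e. t in p(E), the fiber is a.e. contained in E or in D \ E *)
  (exists N : set R, (@lebesgue_measure R).-negligible N /\
     forall t, ((projp (R:=R)) @` E) t -> ~ N t ->
       (@lebesgue_measure R).-negligible (fiberx t `\` slicex E t) \/
       (@lebesgue_measure R).-negligible (fiberx t `&` slicex E t)) ->
  (leb2 R).-negligible E \/ (leb2 R).-negligible (domD R `\` E).
Proof. exact: (@main R E). Qed.
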